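(* Let $q$ be an odd prime power, $a\in\mathbb{F}_q^*$ a non-square, $\beta\in\mathbb{F}_{q^2}$ with $\beta^2=a$, and for $c\in\mathbb{F}_q^*$ let $f_c(X)=X(X^{q-1}-c)^{q+1}$ as a map $\mathbb{F}_{q^2}\to\mathbb{F}_{q^2}$. Then the map $\varphi:\mathbb{F}_{q^2}\to\mathbb{F}_{q^2}$, $\varphi(x+y\beta)=y+x\beta^{-1}$ ($x,y\in\mathbb{F}_q$), is a bijection satisfying $\varphi\circ f_c=f_{-c}\circ\varphi$; consequently the functional graphs $\mathcal{G}(f_c)$ and $\mathcal{G}(f_{-c})$ are isomorphic.
   Context: The functional graph $\mathcal{G}(f)$ of $f:\mathbb{F}_{q^2}\to\mathbb{F}_{q^2}$ is the directed graph with vertex set $\mathbb{F}_{q^2}$ and edges $\langle x,f(x)\rangle$. *)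

(* Defs.v *)
From HB Require Import structures.
From mathcomp Require Import all_boot all_order all_algebra all_field.
Set Implicit Arguments. Unset Strict Implicit. Unset Printing Implicit Defensive.
Import GRing.Theory.
Local Open Scope ring_scope.

Definition fc (F : finFieldType) (L : fieldType) (iota : {rmorphism F -> L})
  (c : F) (x : L) : L :=
  x * (x ^+ (#|F|.-1) - iota c) ^+ (#|F|.+1).

Definition fgraph_edge (T : eqType) (f : T -> T) : rel T := fun x y => y == f x.

Definition digraph_iso (T : Type) (e1 e2 : T -> T -> bool) : Prop :=
  exists h : T -> T, bijective h /\ forall x y, e1 x y = e2 (h x) (h y).

Definition fgraph_isomorphic (T : eqType) (f g : T -> T) : Prop :=
  digraph_iso (fgraph_edge f) (fgraph_edge g).

(* Main.v *)
Require Import Defs.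
From HB Require Import structures.
From mathcomp Require Import all_boot all_order all_algebra all_field.
From mathcomp Require Import ring.
Import GRing.Theory.
Local Open Scope ring_scope.

Theorem mainTheorem4
  (F L : finFieldType) (iota : {rmorphism F -> L})
  (Hq : exists p k : nat, [/\ prime p, (0 < k)%N & #|F| = (p ^ k)%N])
  (Hodd : odd #|F|)
  (HL : #|L| = (#|F| ^ 2)%N)
  (a : F) (Ha0 : a != 0) (Hansq : ~ exists b : F, b ^+ 2 = a)
  (beta : L) (Hbeta : beta ^+ 2 = iota a)
  (c : F) (Hc : c != 0) :
  (exists phi : L -> L,
      forall x y : F, phi (iota x + iota y * beta) = iota y + iota x * beta^-1)
  /\ (forall phi : L -> L,
      (forall x y : F, phi (iota x + iota y * beta) = iota y + iota x * beta^-1) ->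
      bijective phi /\ phi \o fc iota c =1 fc iota (- c) \o phi)
  /\ fgraph_isomorphic (fc iota c) (fc iota (- c)).
Proof.
have q1 : (1 < #|F|)%N.
  by apply/card_gt1P; exists 0, 1; split => //; rewrite eq_sym oner_neq0.
have nb : forall b, beta != iota b.
  move=> b; apply/eqP => Eb; apply: Hansq; exists b; apply: (fmorph_inj iota).
  by rewrite rmorphXn -Eb.
have b0 : beta != 0 by move: (nb 0); rewrite rmorph0.
have frob : beta ^+ #|F| = - beta.
  have : (beta ^+ #|F|) ^+ 2 == beta ^+ 2.
    by rewrite -exprM mulnC exprM Hbeta -rmorphXn expf_card.
  rewrite eqf_sqr => /orP [/eqP E|/eqP //].
  exfalso.
  pose P : {poly L} := 'X^#|F| - 'X.
  have P0 : P != 0.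
    by rewrite -size_poly_eq0 /P size_polyDl ?size_polyN ?size_polyXn ?size_polyX.
  have sP : size P = #|F|.+1.
    by rewrite /P size_polyDl ?size_polyN ?size_polyXn ?size_polyX.
  have A : all (root P) (beta :: map iota (enum F)).
    rewrite /= /root !hornerE E subrr eqxx /=.
    apply/allP => x /mapP [y _ ->]; rewrite /root !hornerE -rmorphXn expf_card.
    by rewrite subrr.
  have U : uniq (beta :: map iota (enum F)).
    rewrite /= map_inj_uniq ?enum_uniq ?andbT; last exact: fmorph_inj.
    by apply/mapP => [[y _ Ey]]; move: (nb y); rewrite Ey eqxx.
  have := max_poly_roots P0 A U.
  by rewrite sP /= size_map -cardE ltnn.
have bm1 : beta ^+ #|F|.-1 = -1.
  apply: (mulIf b0); rewrite -exprSr prednK ?frob ?mulN1r //.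
  exact: ltnW.
have ev : ~~ odd #|F|.+1 by rewrite /= Hodd.
have key : forall z, fc iota (- c) (z / beta) = fc iota c z / beta.
  move=> z; rewrite /fc expr_div_n bm1 invrN invr1 mulrN1 rmorphN.
  rewrite -opprD exprNn -signr_odd (negbTE ev) expr0 mul1r.
  by rewrite mulrAC.
have inj_g : injective (fun p : F * F => iota p.1 + iota p.2 * beta).
  move=> [x y] [x' y'] /= E.
  have Ey : y = y'.
    apply/eqP; apply/negPn/negP => ne.
    have ne' : iota y - iota y' != 0.
      by rewrite -rmorphB fmorph_eq0 subr_eq0.
    move: (nb ((x' - x) / (y - y'))); rewrite fmorph_div !rmorphB.
    have -> : iota x' - iota x = (iota y - iota y') * beta.
      have -> : iota x' = iota x + iota y * beta - iota y' * beta by rewrite E addrK.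
      by rewrite mulrBl; ring.
    by rewrite mulrAC divff // mul1r eqxx.
  by subst y'; congr (_, _); apply: (fmorph_inj iota); apply: (addIr (iota y * beta)).
have surj : forall z : L, exists x y, z = iota x + iota y * beta.
  move=> z; have cE : #|L| = #|{: F * F}| by rewrite HL card_prod expnS expn1.
  have [g gK Kg] := inj_card_bij inj_g (eq_leq cE).
  exists (g z).1, (g z).2.
  have -> : iota (g z).1 + iota (g z).2 * beta = (fun p : F * F => iota p.1 + iota p.2 * beta) (g z) by [].
  by rewrite Kg.
have phiE : forall x y : F, (iota x + iota y * beta) / beta = iota y + iota x * beta^-1.
  by move=> x y; rewrite mulrDl -mulrA divff // mulr1 addrC.
have bijd : bijective (fun z : L => z / beta).
  by exists (fun z => z * beta) => z /=; rewrite ?divfK ?mulfK.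
split; first by exists (fun z => z / beta).
split.
  move=> phi Hphi.
  have pE : phi =1 (fun z => z / beta).
    by move=> z; have [x [y ->]] := surj z; rewrite Hphi phiE.
  split; first exact: (eq_bij bijd (fun z => esym (pE z))) .
  by move=> z /=; rewrite !pE key.
exists (fun z => z / beta); split => // x y.
rewrite /fgraph_edge key; apply/eqP/eqP => [-> //|]; exact: (mulIf (invr_neq0 b0)).
Qed.
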